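(* For every $c\in(0,1)$ there is $\epsilon_0>0$ such that for every $\epsilon\in(0,\epsilon_0)$ there is $n_0$ with the following property. Let $K=\epsilon^{-1}$, let $n\geq n_0$, and let $N=\epsilon 2^{\epsilon^{-1}}n$ (where $K$ and $N$ are integers). If $\Gamma$ is a simple $N$-blowup of $U(K)$, then there is an induced subgraph $G$ of $\Gamma$ such that every $\epsilon^{100}$-regular partition of $G$ has at least $2^{\epsilon^{-1+c}}$ parts.
   Context: Graphs $G=(V,E)$, $E\subseteq\binom V2$. $d_G(X,Y)=|\{(x,y)\in X\times Y:xy\in E\}|/(|X||Y|)$. A pair $(X,Y)$ is $\eta$-regular if $|d_G(X,Y)-d_G(X',Y')|\le\eta$ for all $X'\subseteq X,Y'\subseteq Y$ with $|X'|\ge\eta|X|,|Y'|\ge\eta|Y|$; a partition $\mathcal P$ of $V$ (not necessarily equitable; pairs $(X,X)$ allowed) is $\eta$-regular if at least $(1-\eta)|V|^2$ pairs in $V^2$ lie in $X\times Y$ for some $\eta$-regular $(X,Y)\in\mathcal P^2$. $U(K)$ is the bipartite graph with vertices $a_1,\dots,a_K$, $b_S$ ($S\subseteq[K]$) and edges $a_ib_S$ for $i\in S$. For a graph $G=(U,E)$, a simple $N$-blowup of $G$ is the graph with vertex set $\bigcup_{u\in U}V_u$ (disjoint, $|V_u|=N$) and edge set $\bigcup_{uu'\in E}\{xy:x\in V_u,y\in V_{u'}\}$. *)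

(* Defs.v *)
From HB Require Import structures.
From mathcomp Require Import all_boot all_order all_algebra.
From mathcomp Require Import boolp reals exp.
Set Implicit Arguments. Unset Strict Implicit. Unset Printing Implicit Defensive.
Import Order.TTheory GRing.Theory Num.Theory.
Local Open Scope ring_scope.

(* Vertices of U(K): a_i = inl i (i : 'I_K), b_S = inr S (S : {set 'I_K}). *)
Definition UK_vertex (K : nat) : finType := ('I_K + {set 'I_K})%type.

Definition UK_adj (K : nat) : rel (UK_vertex K) :=
  fun u v => match u, v with
             | inl i, inr T => i \in T
             | inr T, inl i => i \in T
             | _, _ => false
             end.

Definition is_simple_blowup (U : finType) (adjU : rel U) (N : nat)
  (V : finType) (E : rel V) : Prop :=
  exists f : V -> U,
    (forall u : U, #|[set x | f x == u]| = N) /\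
    (forall x y : V, E x y = adjU (f x) (f y)).

Definition induced (V : finType) (E : rel V) (S : {set V}) : rel V :=
  fun x y => [&& x \in S, y \in S & E x y].

Definition density (R : realType) (V : finType) (E : rel V) (X Y : {set V}) : R :=
  #|[set p : V * V | [&& p.1 \in X, p.2 \in Y & E p.1 p.2]]|%:R
  / (#|X| * #|Y|)%:R.

Definition regular_pair (R : realType) (V : finType) (E : rel V) (eta : R)
  (X Y : {set V}) : Prop :=
  forall X' Y' : {set V}, X' \subset X -> Y' \subset Y ->
    eta * #|X|%:R <= #|X'|%:R -> eta * #|Y|%:R <= #|Y'|%:R ->
    `|density R E X Y - density R E X' Y'| <= eta.

(* P is an eta-regular partition of the vertex set S of the graph (S, E):
   P partitions S (not necessarily equitably) and at least (1-eta)|S|^2 pairs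
   of S^2 lie in X x Y for some eta-regular (X,Y) in P^2. *)
Definition regular_partition (R : realType) (V : finType) (E : rel V)
  (S : {set V}) (eta : R) (P : {set {set V}}) : Prop :=
  partition P S /\
  (1 - eta) * (#|S| ^ 2)%:R <=
  #|[set p : V * V | [&& p.1 \in S, p.2 \in S &
       [exists X in P, exists Y in P,
          [&& p.1 \in X, p.2 \in Y & `[< regular_pair E eta X Y >]]]]]|%:R.

(* Main.v *)
Require Import Defs.
From HB Require Import structures.
From mathcomp Require Import all_boot all_order all_algebra.
From mathcomp Require Import boolp reals exp.
From mathcomp Require Import lra ring.
Import Order.TTheory GRing.Theory Num.Theory.
Set Implicit Arguments. Unset Strict Implicit. Unset Printing Implicit Defensive.

Lemma card_bigcup_le (T I : finType) (P : pred I) (F : I -> {set T}) :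
  (#|\bigcup_(i | P i) F i| <= \sum_(i | P i) #|F i|)%N.
Proof.
elim/big_rec2: _ => [|i X m _ IH]; first by rewrite cards0.
by apply: leq_trans (leq_card_setU _ _) _; rewrite leq_add2l.
Qed.

Lemma card_set_type (T : finType) : #|{set T}| = (2 ^ #|T|)%N.
Proof. by rewrite -(cardsT {set T}) -powersetT card_powerset cardsT. Qed.

Section NumS.
Local Open Scope ring_scope.
Lemma numeric (R : realType) (k nn x sig eta : R) : 64 <= k -> 0 < nn -> 0 < eta ->
  eta * k ^+ 3 <= 1 -> 0 <= sig ->
  (nn - eta * (2 * k * nn)) * sig <= k * eta * (2 * k * nn) ^+ 2 ->
  k * nn <= x + k * (eta * (2 * k * nn)) + sig -> k * nn <= 2 * x.
Proof.
move=> hk hn he hek hs hC hM.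
set a := eta * k.
have ha0 : 0 <= a by rewrite mulr_ge0 // ?ltW //; lra.
have h1 : a * (k * k) <= 1 by rewrite /a; move: hek; rewrite !exprS expr0; nra.
have hak : a * k <= 1 / 64.
  have : a * k * 64 <= a * k * k by apply: ler_wpM2l; nra.
  nra.
have h2 : a <= 1 / 4096.
  have : a * 4096 <= a * (k * k) by apply: ler_wpM2l => //; nra.
  lra.
have hC' : (1 - 2 * a) * sig * nn <= 4 * nn * nn.
  have e1 : (nn - eta * (2 * k * nn)) * sig = (1 - 2 * a) * sig * nn by rewrite /a; ring.
  have e2 : k * eta * (2 * k * nn) ^+ 2 = 4 * (a * (k * k)) * nn * nn by rewrite /a; ring.
  rewrite -e1; apply: le_trans hC _; rewrite e2.
  have : 0 <= nn * nn by nra.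
  nra.
have h3 : (1 - 2 * a) * sig <= 4 * nn by rewrite -(ler_pM2r hn); move: hC'; rewrite mulrA.
have h4 : a * sig <= sig / 4096 by nra.
have h5 : k * (eta * (2 * k * nn)) = 2 * (a * k) * nn by rewrite /a; ring.
have h6 : (a * k) * nn <= nn / 64 by nra.
nra.
Qed.
End NumS.

Section Core.
Variables (R : realType) (K n N : nat) (V : finType) (E : rel V)
  (f : V -> UK_vertex K).
Hypothesis hE : forall x y, E x y = UK_adj (f x) (f y).
Hypothesis hfib : forall u, #|[set x | f x == u]| = N.
Hypothesis hnN : (n <= N)%N.

Definition fib u := [set x | f x == u].
Definition Sb (T : {set 'I_K}) : {set V} := [set x in take n (enum (fib (inr T)))].
Definition SS : {set V} :=
  [set x | match f x with inl _ => true | inr T => x \in Sb T end].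
Definition isb (x : V) := if f x is inr _ then true else false.
Definition SSb : {set V} := [set x in SS | isb x].

Lemma card_split (A : {set V}) : #|A| = (\sum_u #|A :&: fib u|)%N.
Proof.
rewrite -sum1_card (partition_big f predT) //; apply: eq_bigr => u _.
rewrite sum1dep_card; apply: eq_card => x; rewrite !inE.
by [].
Qed.

Lemma Sb_fib T : Sb T \subset fib (inr T).
Proof.
apply/subsetP => x; rewrite inE => /mem_take; by rewrite mem_enum.
Qed.

Lemma card_Sb T : #|Sb T| = n.
Proof.
have u : uniq (take n (enum (fib (inr T)))) by apply: take_uniq; apply: enum_uniq.
rewrite cardsE (card_uniqP u) size_take -cardE hfib.
by case: ltnP => // h; apply/eqP; rewrite eqn_leq h hnN.
Qed.

Lemma SS_inl i : SS :&: fib (inl i) = fib (inl i).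
Proof. by apply/setP => x; rewrite !inE; case: (f x) => [j|T] //=; rewrite andbF. Qed.

Lemma SS_inr T : SS :&: fib (inr T) = Sb T.
Proof.
apply/setP => x; rewrite in_setI [x \in SS]inE [x \in fib _]inE.
case: eqP => [->|ne]; first by rewrite andbT.
rewrite andbF; apply/esym/negP => h.
by move/subsetP: (Sb_fib T) => /(_ x h); rewrite inE => /eqP.
Qed.

Lemma card_SS : #|SS| = (K * N + 2 ^ K * n)%N.
Proof.
rewrite card_split (big_sumType _ _ (fun u => #|SS :&: fib u|)) /=.
congr (_ + _)%N.
  rewrite (eq_bigr (fun _ => N)); last by move=> i _; rewrite SS_inl hfib.
  by rewrite sum_nat_const card_ord mulnC.
rewrite (eq_bigr (fun _ => n)); last by move=> i _; rewrite SS_inr card_Sb.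
by rewrite sum_nat_const card_set_type card_ord.
Qed.

Lemma card_SSb : #|SSb| = (2 ^ K * n)%N.
Proof.
rewrite card_split (big_sumType _ _ (fun u => #|SSb :&: fib u|)) /=.
rewrite big1 ?add0n; last first.
  move=> i _; apply/eqP; rewrite cards_eq0; apply/eqP/setP => x.
  by rewrite !inE /isb; case: eqP => [->|]; rewrite ?andbF ?andbT.
rewrite (eq_bigr (fun _ => n)); last first.
  move=> T _; rewrite -(card_Sb T) -SS_inr; apply: eq_card => x.
  by rewrite !inE /isb; case: eqP => [->|]; rewrite ?andbF ?andbT.
by rewrite sum_nat_const card_set_type card_ord.
Qed.

Local Open Scope ring_scope.
Variables (eta : R) (P : {set {set V}}).
Hypothesis heta0 : 0 < eta.
Hypothesis heta1 : eta * 2 < 1.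
Hypothesis hreg : regular_partition (induced E SS) SS eta P.

Definition A i : {set V} := fib (inl i).
Definition Y1 (Y : {set V}) i :=
  [set y in Y | if f y is inr T then i \in T else false].
Definition Y0 (Y : {set V}) i :=
  [set y in Y | if f y is inr T then i \notin T else false].
Definition T0 (Y : {set V}) := [set i | eta * #|Y|%:R <= #|Y1 Y i|%:R].
Definition splitb (Y : {set V}) i :=
  (eta * #|Y|%:R <= #|Y1 Y i|%:R) && (eta * #|Y|%:R <= #|Y0 Y i|%:R).

Lemma hpart : partition P SS.
Proof. by case: hreg. Qed.

Lemma sub_part Y : Y \in P -> Y \subset SS.
Proof.
case/and3P: hpart => /eqP <- _ _ YP; exact: bigcup_sup.
Qed.

Lemma part_nonempty Y : Y \in P -> (0 < #|Y|)%N.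
Proof.
move=> YP; rewrite card_gt0; apply/negP => /eqP Y0'.
by move: YP; rewrite Y0' (partition0 hpart).
Qed.

Lemma A_SS i : A i \subset SS.
Proof. by rewrite /A -SS_inl subsetIl. Qed.

Lemma density_full (X' Y' : {set V}) :
  X' \subset SS -> Y' \subset SS ->
  (forall x y, x \in X' -> y \in Y' -> E x y) ->
  (0 < #|X'|)%N -> (0 < #|Y'|)%N ->
  density R (induced E SS) X' Y' = 1.
Proof.
move=> /subsetP hX /subsetP hY hxy h1 h2.
rewrite /density.
have -> : [set p : V * V | [&& p.1 \in X', p.2 \in Y' & induced E SS p.1 p.2]]
   = setX X' Y'.
  apply/setP => -[x y]; rewrite !inE /induced /=.
  case hx: (x \in X'); case hy: (y \in Y') => //=.
  by rewrite (hX _ hx) (hY _ hy) hxy.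
rewrite cardsX mulfV //; rewrite pnatr_eq0 -lt0n muln_gt0 h1 h2 //.
Qed.

Lemma density_empty (X' Y' : {set V}) :
  (forall x y, x \in X' -> y \in Y' -> E x y = false) ->
  density R (induced E SS) X' Y' = 0.
Proof.
move=> hxy; rewrite /density.
have -> : [set p : V * V | [&& p.1 \in X', p.2 \in Y' & induced E SS p.1 p.2]]
   = set0.
  apply/setP => -[x y]; rewrite !inE /induced /=.
  case hx: (x \in X'); case hy: (y \in Y') => //=.
  by rewrite hxy ?andbF.
by rewrite cards0 mul0r.
Qed.

Lemma Y1_sub Y i : Y1 Y i \subset Y.
Proof. by apply/subsetP => y; rewrite inE => /andP[]. Qed.
Lemma Y0_sub Y i : Y0 Y i \subset Y.
Proof. by apply/subsetP => y; rewrite inE => /andP[]. Qed.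

Lemma irregular X Y i : X \in P -> Y \in P ->
  eta * #|X|%:R <= #|X :&: A i|%:R -> splitb Y i ->
  ~ regular_pair (induced E SS) eta X Y.
Proof.
move=> XP YP hX /andP[h1 h0] reg.
have gt0 (Z : {set V}) (W : {set V}) : Z \in P -> eta * #|Z|%:R <= #|W|%:R -> (0 < #|W|)%N.
  move=> ZP h; rewrite -(ltr_nat R); apply: lt_le_trans h.
  by rewrite mulr_gt0 // ltr0n part_nonempty.
have sX := sub_part XP; have sY := sub_part YP.
have d1 := reg _ _ (subsetIl X (A i)) (Y1_sub Y i) hX h1.
have d0 := reg _ _ (subsetIl X (A i)) (Y0_sub Y i) hX h0.
rewrite (@density_full (X :&: A i) (Y1 Y i)) in d1; last 5 first.
- exact: subset_trans (subsetIl _ _) sX.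
- exact: subset_trans (Y1_sub _ _) sY.
- move=> x y; rewrite !inE => /andP[_ /eqP fx] /andP[_].
  by rewrite hE fx; case: (f y).
- exact: gt0 XP hX.
- exact: gt0 YP h1.
rewrite (@density_empty (X :&: A i) (Y0 Y i)) in d0; last first.
  move=> x y; rewrite !inE => /andP[_ /eqP fx] /andP[_].
  by rewrite hE fx; case: (f y) => // T /negbTE.
move: d1 d0; rewrite !ler_norml subr0 => /andP[a b] /andP[c d].
move: a d heta1; set z := density _ _ _ _ => a d h; lra.
Qed.


Definition Good : {set V * V} :=
  [set p : V * V | [&& p.1 \in SS, p.2 \in SS &
       [exists X in P, exists Y in P,
          [&& p.1 \in X, p.2 \in Y & `[< regular_pair (induced E SS) eta X Y >]]]]].
Definition Bad := setX SS SS :\: Good.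

Lemma card_Bad : #|Bad|%:R <= eta * (#|SS| ^ 2)%:R.
Proof.
have hG : (1 - eta) * (#|SS| ^ 2)%:R <= #|Good|%:R by case: hreg.
have Gsub : Good \subset setX SS SS.
  by apply/subsetP => -[x y]; rewrite !inE /= => /and3P[-> -> _].
rewrite /Bad cardsD (setIidPr Gsub) natrB; last exact: subset_leq_card.
rewrite cardsX mulnn.
move: hG; set a := (_ ^ 2)%:R; set b := #|Good|%:R => hG; lra.
Qed.

Lemma trivP : trivIset P.
Proof. by case/and3P: hpart. Qed.

Lemma coverP : cover P = SS.
Proof. by case/and3P: hpart => /eqP. Qed.

Definition H i := [set x in A i | eta * #|pblock P x|%:R <= #|pblock P x :&: A i|%:R].
Definition C i := cover [set Y in P | splitb Y i].

Lemma bad_sub i : setX (H i) (C i) \subset Bad.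
Proof.
apply/subsetP => -[x y]; rewrite in_setX /= => /andP[].
rewrite in_set => /andP[xA hx] yC.
have xS : x \in SS := subsetP (A_SS i) x xA.
move: yC; rewrite /C /cover => /bigcupP [Y]; rewrite in_set => /andP[YP sp] yY.
have yS : y \in SS := subsetP (sub_part YP) y yY.
rewrite in_setD in_setX xS yS /= andbT.
apply/negP; rewrite in_set /= xS yS /=.
move=> /fintype.existsP [X] /andP [XP /fintype.existsP [Y'] /andP[Y'P /and3P[xX yY' /asboolP rg]]].
have eX : pblock P x = X := def_pblock trivP XP xX.
have eY : Y' = Y by rewrite -(def_pblock trivP YP yY) (def_pblock trivP Y'P yY').
rewrite eX in hx; rewrite eY in rg.
exact: irregular XP YP hx sp rg.
Qed.

Lemma sum_eta (F : {set V} -> {set V}) :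
  (forall X, X \in P -> #|F X|%:R <= eta * #|X|%:R) ->
  #|\bigcup_(X in P) F X|%:R <= eta * #|SS|%:R.
Proof.
move=> h.
apply: le_trans (_ : _ <= (\sum_(X in P) #|F X|)%:R) _.
  by rewrite ler_nat; apply: (card_bigcup_le (fun X => X \in P)).
rewrite natr_sum; apply: le_trans (ler_sum _ h) _.
by rewrite -mulr_sumr -natr_sum -(card_partition hpart).
Qed.

Lemma cardH i : N%:R - eta * #|SS|%:R <= #|H i|%:R.
Proof.
pose L := \bigcup_(X in P)
   (if eta * #|X|%:R <= #|X :&: A i|%:R then set0 else X :&: A i).
have hL : #|L|%:R <= eta * #|SS|%:R.
  apply: sum_eta => X XP; case: ifP => h; first by rewrite cards0 mulr_ge0 // ltW.
  by apply: ltW; rewrite ltNge h.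
have sub : A i \subset H i :|: L.
  apply/subsetP => x xA; have xS : x \in SS := subsetP (A_SS i) x xA.
  have XP : pblock P x \in P by apply: pblock_mem; rewrite coverP.
  have xX : x \in pblock P x by rewrite mem_pblock coverP.
  rewrite in_setU; case h: (eta * #|pblock P x|%:R <= #|pblock P x :&: A i|%:R).
    by rewrite in_set xA h.
  apply/orP; right; apply/bigcupP; exists (pblock P x) => //.
  by rewrite h in_setI xX.
have : (N <= #|H i| + #|L|)%N.
  rewrite -(hfib (inl i)); apply: leq_trans (leq_card_setU _ _).
  exact: subset_leq_card sub.
rewrite -(ler_nat R) natrD => hN.
move: hN hL; set a := #|H i|%:R; set b := #|L|%:R => hN hL; lra.
Qed.

Lemma cardC i : (N%:R - eta * #|SS|%:R) * #|C i|%:R <= eta * (#|SS| ^ 2)%:R.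
Proof.
apply: le_trans (card_Bad).
apply: le_trans (_ : (#|H i| * #|C i|)%:R <= _).
  by rewrite natrM ler_wpM2r // cardH.
by rewrite ler_nat -cardsX; apply: subset_leq_card; apply: bad_sub.
Qed.


Definition D Y i := if i \in T0 Y then Y0 Y i else Y1 Y i.
Definition Small i := \bigcup_(Y in P) (if splitb Y i then set0 else D Y i).
Definition Typ := \bigcup_(Y in P) (SS :&: fib (inr (T0 Y))).

Lemma cardSmall i : #|Small i|%:R <= eta * #|SS|%:R.
Proof.
apply: sum_eta => Y YP; case: ifP => sp; first by rewrite cards0 mulr_ge0 // ltW.
rewrite /D in_set; case: ifP => h.
  by move: sp; rewrite /splitb h /= => /negbT; rewrite -ltNge => /ltW.
by move/negbT: h; rewrite -ltNge => /ltW.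
Qed.

Lemma cardTyp : (#|Typ| <= #|P| * n)%N.
Proof.
apply: leq_trans (card_bigcup_le (fun X => X \in P) _) _.
rewrite (eq_bigr (fun _ => n)); first by rewrite sum_nat_const.
by move=> Y _; rewrite SS_inr card_Sb.
Qed.

Lemma cover_b : SSb \subset Typ :|: \bigcup_(i : 'I_K) (Small i :|: C i).
Proof.
apply/subsetP => y; rewrite in_set => /andP[yS].
rewrite /isb; case fy: (f y) => [//|T] _.
have YP : pblock P y \in P by apply: pblock_mem; rewrite coverP.
have yY : y \in pblock P y by rewrite mem_pblock coverP.
set Y := pblock P y in YP yY *.
case: (pickP (fun i => (i \in T) != (i \in T0 Y))) => [i Hi | H0]; last first.
  have eT : T = T0 Y by apply/setP => i; move: (H0 i) => /negbFE/eqP.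
  rewrite in_setU; apply/orP; left; apply/bigcupP; exists Y => //.
  by rewrite in_setI yS /fib inE fy eT eqxx.
rewrite in_setU; apply/orP; right; apply/bigcupP; exists i => //.
have yD : y \in D Y i.
  rewrite /D; case: ifP Hi => h Hi.
    by rewrite in_set yY fy; move: Hi; case: (i \in T).
  by rewrite in_set yY fy; move: Hi; case: (i \in T).
rewrite in_setU; case sp: (splitb Y i).
  apply/orP; right; rewrite /C /cover; apply/bigcupP; exists Y => //.
  by rewrite in_set YP sp.
by apply/orP; left; apply/bigcupP; exists Y => //; rewrite sp.
Qed.

Lemma main_ineq : (2 ^ K * n)%:R <=
  (#|P| * n)%:R + K%:R * (eta * #|SS|%:R) + \sum_(i : 'I_K) #|C i|%:R.
Proof.
have h1 : (#|SSb| <= #|Typ| + \sum_(i : 'I_K) (#|Small i| + #|C i|))%N.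
  apply: leq_trans (subset_leq_card cover_b) _.
  apply: leq_trans (leq_card_setU _ _) _; rewrite leq_add2l.
  apply: leq_trans (card_bigcup_le _ _) _.
  by apply: leq_sum => i _; apply: leq_card_setU.
rewrite -card_SSb; apply: le_trans (_ : _ <= (#|Typ| + \sum_(i : 'I_K) (#|Small i| + #|C i|))%:R) _.
  by rewrite ler_nat.
rewrite natrD -addrA lerD // ?ler_nat ?cardTyp //.
rewrite natr_sum (eq_bigr (fun i => #|Small i|%:R + #|C i|%:R)); last by move=> i _; rewrite natrD.
rewrite big_split /= lerD2r.
apply: le_trans (ler_sum _ (fun i _ => cardSmall i)) _.
by rewrite sumr_const card_ord mulr_natl.
Qed.


Lemma core_bound : (64 <= K)%N -> (K * N = 2 ^ K * n)%N -> (0 < n)%N ->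
  eta * K%:R ^+ 3 <= 1 -> (2 ^ K.-1 <= #|P|)%N.
Proof.
move=> hK hKN hn heK.
have hS : #|SS|%:R = 2 * K%:R * N%:R :> R.
  by rewrite card_SS -hKN natrD natrM; ring.
have hM : (2 ^ K * n)%:R = K%:R * N%:R :> R by rewrite -hKN natrM.
have hN : (0 < N)%N.
  have : (0 < 2 ^ K * n)%N by rewrite muln_gt0 expn_gt0 hn.
  by rewrite -hKN muln_gt0 => /andP[_ ->].
have hsum : (N%:R - eta * #|SS|%:R) * \sum_(i : 'I_K) #|C i|%:R <=
            K%:R * eta * (2 * K%:R * N%:R) ^+ 2.
  rewrite mulr_sumr; apply: le_trans (ler_sum _ (fun i _ => cardC i)) _.
  by rewrite sumr_const card_ord natrX hS -[X in X <= _]mulr_natl mulrA.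
have := @numeric R K%:R N%:R (#|P| * n)%:R (\sum_(i : 'I_K) #|C i|%:R) eta.
have hmain := main_ineq; rewrite hS in hsum hmain.
rewrite -hM; move/(_ _ _ heta0 heK _ hsum hmain).
have hK' : 64 <= K%:R :> R by rewrite (ler_nat R 64).
rewrite ltr0n hN sumr_ge0 //; move/(_ hK' isT isT).
rewrite -(natrM R 2) ler_nat mulnA leq_pmul2r //.
by case: (K) hK => // k _; rewrite expnS leq_pmul2l.
Qed.

End Core.
Unset Implicit Arguments.
Local Open Scope ring_scope.

Theorem proposition6p4 (R : realType) (c : R) :
  0 < c < 1 ->
  exists eps0 : R, 0 < eps0 /\
  forall eps : R, 0 < eps < eps0 ->
  exists n0 : nat,
  forall K n N : nat,
    K%:R = eps^-1 ->
    (n0 <= n)%N ->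
    N%:R = eps * 2 ^+ K * n%:R ->
    forall (V : finType) (E : rel V),
      is_simple_blowup (@UK_adj K) N E ->
      exists S : {set V},
        forall P : {set {set V}},
          regular_partition (induced E S) S (eps ^+ 100) P ->
          powR 2 (powR eps (c - 1)) <= #|P|%:R.
Proof.
move=> /andP[c0 c1].
have p0 : 0 < powR 2 (- c^-1) by apply: powR_gt0.
exists (Num.min (1/64) (powR 2 (- c^-1))); split.
  by rewrite lt_min p0 andbT; lra.
move=> eps /andP[e0]; rewrite lt_min => /andP[e64 e2].
exists 1%N => K n N hK hn hN V E [f [hfib hE]].
have hKe : K%:R * eps = 1 by rewrite hK mulVf // gt_eqF.
have K64 : (63 < K)%N.
  rewrite -(ltr_nat R); nra.
have hKN : (K * N = 2 ^ K * n)%N.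
  apply/eqP; rewrite -(eqr_nat R) !natrM natrX hN !mulrA hKe mul1r //.
have hnN : (n <= N)%N.
  have hK0 : (0 < K)%N by apply: leq_trans K64.
  rewrite -(leq_pmul2l hK0) hKN leq_pmul2r //.
  exact: ltnW (ltn_expl K (isT : (1 < 2)%N)).
have e1 : eps <= 1 by lra.
have eta0 : 0 < eps ^+ 100 by rewrite exprn_gt0.
have eta1 : eps ^+ 100 * 2 < 1.
  have : eps ^+ 100 <= eps.
    by rewrite (exprS eps 99) mulrC; apply: ler_piMl; [exact: ltW| exact: exprn_ile1 (ltW e0) e1].
  lra.
have eta3 : eps ^+ 100 * K%:R ^+ 3 <= 1.
  rewrite (_ : 100%N = (97 + 3)%N) // exprD -mulrA -exprMn (mulrC eps) hKe expr1n mulr1.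
  exact: exprn_ile1 (ltW e0) e1.
exists (SS n f) => P hreg.
have hP := core_bound hE hfib hnN eta0 eta1 hreg K64 hKN hn eta3.
have hc : powR eps (c - 1) <= (K.-1)%:R.
  rewrite powRB; last by rewrite (gt_eqF e0) implybT.
  rewrite powRr1; last exact: ltW.
  have : powR eps c <= 2^-1.
    rewrite -powR_inv1 // (_ : (-1 : R) = - c^-1 * c); last by rewrite mulNr mulVf // gt_eqF.
    rewrite powRrM.
    apply: ge0_ler_powR; [exact: ltW | by rewrite nnegrE ltW | exact: powR_ge0 | exact: ltW].
  rewrite -hK.
  case: (K) K64 => // k hk; rewrite -[k.+1.-1]/k -[k.+1]addn1 natrD.
  have hk1 : 1 <= k%:R :> R by rewrite ler1n -ltnS (leq_trans _ hk).
  have := powR_ge0 eps c.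
  nra.
apply: le_trans (ler_powR _ hc) _; first lra.
rewrite powR_mulrn; last lra.
by rewrite -natrX ler_nat.
Qed.
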